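(* Let $A\subseteq X$ be a clopen set with $A\neq\emptyset$, $A\neq X$. Then in $G=S(2^\infty)\ltimes \widetilde C(X;\mathbb{Z}_2)$ one has $\mathrm{fpc}(\widetilde f_A)=\{e,\widetilde f_A\}$.
   Context: For a group $G$ and $g\in G$, $C_G(g)$ is the centralizer of $g$ and $\mathrm{fpc}(g)=\{h\in G:\ \{t^{-1}ht: t\in C_G(g)\}\text{ is finite}\}$. For $n\ge1$ let $S(2^n)$ be the symmetric group of the finite set $\{0,1\}^n$, embedded in $S(2^{n+1})$ via $s\mapsto\tilde s$, $\tilde s(x,y)=(s(x),y)$ ($x\in\{0,1\}^n$, $y\in\{0,1\}$); $S(2^\infty)=\bigcup_n S(2^n)$. Let $X=\{0,1\}^{\mathbb N}$; $S(2^\infty)$ acts on $X$ by homeomorphisms via $s(x,y)=(s(x),y)$ for $s\in S(2^n)$, $x\in\{0,1\}^n$, $y\in\{0,1\}^{\mathbb N}$. $C(X;\mathbb Z_2)$ is the abelian group of continuous maps $X\to\mathbb Z_2$ under pointwise addition; its elements are $f_A=\mathbf 1_A$ for clopen $A\subseteq X$, with $f_Af_B=f_{A\triangle B}$. $S(2^\infty)$ acts by $g\cdot f_A=f_{g(A)}$. The constant functions $\{f_\emptyset,f_X\}$ form an invariant subgroup and $\widetilde C(X;\mathbb Z_2)$ is the quotient group; $\widetilde f_A$ denotes the class of $f_A$ (so $\widetilde f_A=\widetilde f_{X\setminus A}$). $G=S(2^\infty)\ltimes\widetilde C(X;\mathbb Z_2)$, with $g\widetilde f_Ag^{-1}=\widetilde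 f_{g(A)}$. *)

(* Defs.v *)
From mathcomp Require Import all_boot all_order all_fingroup.
From mathcomp Require Import all_classical all_reals all_analysis.
From Stdlib Require List.
Set Implicit Arguments. Unset Strict Implicit. Unset Printing Implicit Defensive.
Local Open Scope classical_set_scope.

Definition X := cantor_space.

Definition prefix (n : nat) (x : X) : n.-tuple bool :=
  [tuple x (nat_of_ord i) | i < n].

(* Action of s in S(2^n) on X:  s(x,y) = (s(x), y). *)
Definition sact (n : nat) (s : {perm n.-tuple bool}) (x : X) : X :=
  fun i => match ltnP i n with
           | LtnNotGeq H => tnth (s (prefix n x)) (Ordinal H)
           | _ => x i
           end.

(* g : X -> X belongs to S(2^oo) = \bigcup_n S(2^n) (identified with its
   (faithful) action on X). *)
Definition inS (g : X -> X) : Prop :=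
  exists n (s : {perm n.-tuple bool}), forall x, g x = sact s x.

(* Elements of G = S(2^oo) |x C~(X;Z_2): the pair (A, g) denotes
   f~_A * g, with A clopen and g in S(2^oo). *)
Record Gelt := MkG {
  Gset : set X;
  Gperm : X -> X;
  Gset_clopen : clopen Gset;
  Gperm_inS : inS Gperm }.

Definition symdiff (A B : set X) : set X := (A `\` B) `|` (B `\` A).

(* Raw representatives and their product:
   (f_A1 g1)(f_A2 g2) = f_A1 (g1 f_A2 g1^-1) g1 g2 = f_(A1 Δ g1(A2)) g1 g2. *)
Definition Graw := (set X * (X -> X))%type.
Definition graw (a : Gelt) : Graw := (Gset a, Gperm a).
Definition rmul (a b : Graw) : Graw :=
  (symdiff a.1 (a.2 @` b.1), a.2 \o b.2).

(* Equality in G: f~_A = f~_(X \ A). *)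
Definition Geq (a b : Graw) : Prop :=
  a.2 = b.2 /\ (a.1 = b.1 \/ a.1 = ~` b.1).

Definition Ge : Graw := (set0, id).
Definition Gf (A : set X) : Graw := (A, id).

(* k is a conjugate t^-1 h t with t in C_G(g), i.e. t g = g t and h t = t k. *)
Definition conj_by_centralizer (g h k : Gelt) : Prop :=
  exists t : Gelt, Geq (rmul (graw t) (graw g)) (rmul (graw g) (graw t)) /\
                   Geq (rmul (graw h) (graw t)) (rmul (graw t) (graw k)).

(* fpc(g): those h whose C_G(g)-conjugacy orbit is finite (finitely many
   elements of G, i.e. classes of representatives up to Geq). *)
Definition fpc (g : Gelt) : set Gelt :=
  [set h | exists L : seq Gelt, forall k, conj_by_centralizer g h k ->
             exists2 k', Stdlib.Lists.List.In k' L & Geq (graw k) (graw k')].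

(* Main.v *)
Require Import Defs.
From mathcomp Require Import all_boot all_order all_fingroup.
From mathcomp Require Import all_classical all_reals all_analysis.
Set Implicit Arguments. Unset Strict Implicit. Unset Printing Implicit Defensive.
Local Open Scope classical_set_scope.



Notation prefix := Defs.prefix.
Definition agree n (x y : X) := forall i, (i < n)%N -> x i = y i.
Definition Cyl n (x : X) : set X := [set y | agree n y x].

Lemma prefixE n x (i : 'I_n) : tnth (prefix n x) i = x i.
Proof. by rewrite tnth_mktuple. Qed.

Lemma prefix_eq n x y : prefix n x = prefix n y <-> agree n x y.
Proof.
split.
- move=> E i Hi; have := prefixE x (Ordinal Hi); rewrite E prefixE //.
- move=> H; apply: eq_from_tnth => i; rewrite !prefixE; exact: H.
Qed.

Lemma sact_ge n (s : {perm n.-tuple bool}) x i : (n <= i)%N -> sact s x i = x i.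
Proof. rewrite /sact; case: (ltnP i n) => // H1 H2; by rewrite leqNgt H1 in H2. Qed.

Lemma sact_lt n (s : {perm n.-tuple bool}) x i (H : (i < n)%N) :
  sact s x i = tnth (s (prefix n x)) (Ordinal H).
Proof.
rewrite /sact; case: (ltnP i n) => H1; first by rewrite (bool_irrelevance H1 H).
by rewrite leqNgt H in H1.
Qed.

Lemma prefix_sact n (s : {perm n.-tuple bool}) x : prefix n (sact s x) = s (prefix n x).
Proof. apply: eq_from_tnth => i; rewrite prefixE (sact_lt _ _ (ltn_ord i)); congr tnth; exact: val_inj. Qed.

Lemma sact_ext n (s : {perm n.-tuple bool}) x y :
  s (prefix n x) = prefix n y -> (forall i, (n <= i)%N -> x i = y i) -> sact s x = y.
Proof.
move=> E Hge; apply: functional_extensionality_dep => i.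
case: (ltnP i n) => Hi; last by rewrite sact_ge // Hge.
by rewrite (sact_lt _ _ Hi) E prefixE.
Qed.

Lemma sactK n (s : {perm n.-tuple bool}) x : sact s^-1 (sact s x) = x.
Proof. apply: sact_ext => //; first by rewrite prefix_sact permK. by move=> i Hi; rewrite sact_ge. Qed.

Lemma sactKV n (s : {perm n.-tuple bool}) x : sact s (sact s^-1 x) = x.
Proof. apply: sact_ext => //; first by rewrite prefix_sact permKV. by move=> i Hi; rewrite sact_ge. Qed.

Lemma sact_fix n (s : {perm n.-tuple bool}) x : s (prefix n x) = prefix n x -> sact s x = x.
Proof. by move=> E; apply: sact_ext. Qed.

Lemma agree_le m n x y : (m <= n)%N -> agree n x y -> agree m x y.
Proof. by move=> Hmn H i Hi; apply: H; exact: leq_trans Hi Hmn. Qed.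

Lemma sact_agree n (s : {perm n.-tuple bool}) M x y :
  (n <= M)%N -> agree M x y -> agree M (sact s x) (sact s y).
Proof.
move=> HM H i Hi; case: (ltnP i n) => Hn.
  rewrite !(sact_lt _ _ Hn); congr (tnth (s _) _); apply/prefix_eq; exact: agree_le H.
by rewrite !sact_ge // H.
Qed.

Lemma clopenC' (T : topologicalType) (A : set T) : clopen A -> clopen (~` A).
Proof. by case=> ? ?; split; [exact: closed_openC | exact: open_closedC]. Qed.

Lemma coord_clopen n (b : bool) : clopen [set y : X | y n = b].
Proof.
have -> : [set y : X | y n = b] = (fun y : X => y n) @^-1` [set b] by [].
apply: preimage_clopen; first by split; [exact: discrete_open|exact: discrete_closed].
exact: (@proj_continuous nat (fun _ => bool) n).
Qed.

Lemma cyl_clopen n x : clopen (Cyl n x).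
Proof.
elim: n => [|n IH].
  have -> : Cyl 0 x = setT by apply/seteqP; split => // y _ i.
  exact: clopenT.
have -> : Cyl n.+1 x = Cyl n x `&` [set y : X | y n = x n].
  apply/seteqP; split => y.
    by move=> H; split; [move=> i Hi; apply: H; exact: ltnW | apply: H].
  case=> H1 H2 i; rewrite ltnS leq_eqVlt => /orP[/eqP->//|]; exact: H1.
by apply: clopenI => //; exact: coord_clopen.
Qed.

Lemma agree_refl n x : agree n x x. Proof. by []. Qed.

Lemma open_cyl (S : set X) x : open S -> S x -> exists N, Cyl N x `<=` S.
Proof.
move=> oS Sx; apply: contrapT => /forallNP H.
have /choice [y Hy] : forall N, exists z, Cyl N x z /\ ~ S z.
  move=> N; have := H N => /existsNP [z /not_implyP [Cz nSz]]; by exists z.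
have ycvg : y @ \oo --> (x : X).
  apply/cvg_sup => N U [V] [[W] oW <-] WfN WU.
  apply: (filterS WU); rewrite nbhs_simpl; exists N.+1 => // i /= Hi.
  by rewrite /= (proj1 (Hy i)).
have : \forall n \near \oo, S (y n).
  apply: ycvg; apply: open_nbhs_nbhs; split => //.
case=> M _ HM; exact: (proj2 (Hy M) (HM M (leqnn M))).
Qed.

Lemma cyl_open (S : set X) : (forall x, S x -> exists N, Cyl N x `<=` S) -> open S.
Proof.
move=> H; rewrite openE => z Sz; rewrite /interior.
have [N HN] := H z Sz; apply: (@filterS _ _ _ (Cyl N z)) => //; apply: open_nbhs_nbhs; split => //.
exact: (proj1 (cyl_clopen N z)).
Qed.

Lemma open_sact_pre n (s : {perm n.-tuple bool}) (S : set X) :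
  open S -> open (sact s @^-1` S).
Proof.
move=> oS; apply: cyl_open => x Sx.
have [N HN] := open_cyl oS Sx.
exists (maxn N n) => y Hy; apply: HN.
apply: (agree_le (leq_maxl N n)); apply: sact_agree => //; exact: leq_maxr.
Qed.

Lemma clopen_sact_pre n (s : {perm n.-tuple bool}) (S : set X) :
  clopen S -> clopen (sact s @^-1` S).
Proof.
case=> oS cS; split; first exact: open_sact_pre.
rewrite -openC; have -> : ~` (sact s @^-1` S) = sact s @^-1` (~` S) by []. apply: open_sact_pre; by rewrite openC.
Qed.

Lemma sact_img n (s : {perm n.-tuple bool}) (S : set X) :
  sact s @` S = sact s^-1 @^-1` S.
Proof.
apply/seteqP; split => y.
  by case=> x Sx <-; rewrite /= sactK.
by move=> Hy; exists (sact s^-1 y) => //; rewrite sactKV.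
Qed.

Lemma sact_inj n (s : {perm n.-tuple bool}) : injective (sact s).
Proof. by move=> x y E; rewrite -(sactK s x) E sactK. Qed.

Lemma pre_img n (s : {perm n.-tuple bool}) (S : set X) :
  sact s @^-1` (sact s @` S) = S.
Proof.
apply/seteqP; split => y /=; last by move=> Sy; exists y.
by case=> x Sx /sact_inj <-.
Qed.

Lemma inS_id : inS id.
Proof. exists 0%N, (1%g : {perm 0.-tuple bool}) => x.
apply: functional_extensionality_dep => i. rewrite sact_ge //. Qed.
Lemma set_eqb (P Q : set X) : (forall x, (x \in P) = (x \in Q)) -> P = Q.
Proof.
move=> H; apply/seteqP; split => x Px; have := H x.
  by rewrite (mem_set Px) => /esym/set_mem.
by rewrite (mem_set Px) => /set_mem.
Qed.

Lemma in_symdiff (P Q : set X) x : (x \in symdiff P Q) = (x \in P) (+) (x \in Q).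
Proof.
rewrite /symdiff in_setU !in_setD.
by case: (x \in P); case: (x \in Q).
Qed.
Lemma Geq_sym a b : Geq a b -> Geq b a.
Proof. case=> E [E2|E2]; split => //; [left|right] => //. by rewrite E2 setCK. Qed.

Lemma Geq_trans a b c : Geq a b -> Geq b c -> Geq a c.
Proof.
case=> E1 F1 [E2 F2]; split; first by rewrite E1.
case: F1 F2 => -> [->|->]; rewrite ?setCK; by [left|right].
Qed.

Lemma pig (k : nat -> Graw) (L : seq Gelt) (P : nat -> Prop) :
  (forall m, exists j, (m <= j)%N /\ P j) ->
  (forall j j', j <> j' -> ~ Geq (k j) (k j')) ->
  (forall j, P j -> exists2 k', List.In k' L & Geq (k j) (graw k')) -> False.
Proof.
elim: L P => [|a L IH] P Pinf Hd HL.
  have [j [_ Pj]] := Pinf 0%N; by case: (HL j Pj).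
case: (pselect (exists j, P j /\ Geq (k j) (graw a))) => [[j0 [Pj0 G0]]|Hn].
  apply: (IH (fun j => P j /\ j <> j0)) => //.
    move=> m; have [j [Hj Pj]] := Pinf (maxn m j0.+1); exists j; split.
      exact: leq_trans (leq_maxl _ _) Hj.
    split => // E; move: Hj; rewrite E => /(leq_trans (leq_maxr _ _)); by rewrite ltnn.
  move=> j [Pj Hj]; have [k' [<-|Ik'] Gk] := HL j Pj.
    by exfalso; apply: (Hd j j0 Hj); apply: Geq_trans Gk (Geq_sym G0).
  by exists k'.
apply: (IH P) => // j Pj; have [k' [E|Ik'] Gk] := HL j Pj.
  by exfalso; apply: Hn; exists j; rewrite E.
by exists k'.
Qed.

Definition ext N (p : X) j : X := fun i => if (i < N)%N then p i else i == N + j.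
Definition zext N (p : X) : X := fun i => if (i < N)%N then p i else false.

Lemma ext_agree N p j : agree N (ext N p j) p.
Proof. by move=> i Hi; rewrite /ext Hi. Qed.

Lemma zext_agree N p : agree N (zext N p) p.
Proof. by move=> i Hi; rewrite /zext Hi. Qed.

Lemma ext_sep N p q j j' : j <> j' -> ~ agree (N + j').+1 (ext N p j) (ext N q j').
Proof.
move=> Hj H; case: (ltngtP j j') => Hc; last by apply: Hj.
- have := H (N + j)%N; rewrite /ext ltnS leq_add2l (ltnW Hc) => /(_ isT).
  rewrite ltnNge leq_addr /= eqxx eq_sym eqn_add2l eq_sym => E.
  by move: E; case: eqP => // E'; move: Hc; rewrite E' ltnn.
- have := H (N + j')%N; rewrite /ext ltnS leqnn => /(_ isT).
  rewrite ltnNge leq_addr /= eqxx eqn_add2l.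
  by case: eqP => // E'; move: Hc; rewrite E' ltnn.
Qed.

Lemma zext_sep N p q j : ~ agree (N + j).+1 (zext N p) (ext N q j).
Proof.
move=> H; have := H (N + j)%N (ltnSn _); rewrite /zext /ext ltnNge leq_addr /=.
by rewrite eqxx.
Qed.

Lemma clopen_symdiff (P Q : set X) : clopen P -> clopen Q -> clopen (symdiff P Q).
Proof.
move=> cP cQ; apply: clopenU; rewrite setDE; apply: clopenI => //; exact: clopenC'.
Qed.

Lemma mem_true (P : set X) x : P x -> (x \in P) = true.
Proof. exact: mem_set. Qed.
Lemma mem_false (P : set X) x : ~ P x -> (x \in P) = false.
Proof. exact: memNset. Qed.

Lemma case_perm (fA h : Gelt) (hp : Gperm fA = id) n (s : {perm n.-tuple bool})
  (he : Gperm h = sact s) x0 (hx : sact s x0 <> x0) : ~ fpc fA h.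
Proof.
move=> [L HL].
have [i0 [Hi0 Hne]] : exists i, (i < n)%N /\ sact s x0 i <> x0 i.
  apply: contrapT => /forallNP Hn; apply: hx; apply: functional_extensionality_dep => i.
  case: (ltnP i n) => Hi; last by rewrite sact_ge.
  by apply: contrapT => Hc; apply: (Hn i); split.
pose T j := Cyl (n + j).+1 (ext n x0 j).
pose tj j := MkG (cyl_clopen (n + j).+1 (ext n x0 j)) inS_id.
pose K j := symdiff (symdiff (Gset h) (Gperm h @` T j)) (T j).
have cK : forall j, clopen (K j).
  move=> j; apply: clopen_symdiff; last exact: cyl_clopen.
  apply: clopen_symdiff; first exact: Gset_clopen.
  rewrite he sact_img; apply: clopen_sact_pre; exact: cyl_clopen.
pose kj j := MkG (cK j) (Gperm_inS h).
have notimg : forall w m, agree n w x0 -> (w \in Gperm h @` T m) = false.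
  move=> w m Hw; apply: mem_false => -[y Ty Ey].
  have Hy : agree n y x0.
    move=> i Hi; rewrite (Ty i (leq_trans Hi _)); last exact: leq_trans (leq_addr m n) (leqnSn _).
    exact: ext_agree.
  have HH := sact_agree s (leqnn n) Hy; have := HH i0 Hi0; rewrite -he Ey (Hw i0 Hi0) => E.
  by apply: Hne; rewrite E he.
apply: (@pig (fun j => graw (kj j)) L (fun _ => True)).
- by move=> m; exists m.
- move=> j j' Hj [_ [E|E]].
  + have := congr1 (fun S => ext n x0 j \in S) E => /=.
    rewrite !in_symdiff !notimg; try exact: ext_agree.
    rewrite (mem_true (P := T j)) // (mem_false (P := T j')); last exact: ext_sep.
    by case: (_ \in _).
  + have := congr1 (fun S => zext n x0 \in S) E => /=.
    rewrite in_setC !in_symdiff !notimg; try exact: zext_agree.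
    rewrite !(mem_false (P := T _)); try exact: zext_sep.
    by case: (_ \in _).
- move=> j _; apply: HL; exists (tj j); split.
  + rewrite /Geq /rmul /graw /= hp; split => //; left.
    rewrite !image_id; apply: set_eqb => x; rewrite !in_symdiff; exact: addbC.
  + rewrite /Geq /rmul /graw /=; split => //; left.
    rewrite image_id; apply: set_eqb => x; rewrite !in_symdiff.
    by case: (x \in Gset h); case: (x \in _); case: (x \in T j).
Qed.

Lemma swap_inv M (u v : M.-tuple bool) y :
  sact (tperm u v) (sact (tperm u v) y) = y.
Proof. have := sactK (tperm u v) y; by rewrite tpermV. Qed.

Lemma swap_img M (u v : M.-tuple bool) (S : set X) :
  sact (tperm u v) @` S = sact (tperm u v) @^-1` S.
Proof. by rewrite sact_img tpermV. Qed.

Lemma swap_fix M (u v : M.-tuple bool) y :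
  prefix M y <> u -> prefix M y <> v -> sact (tperm u v) y = y.
Proof.
move=> Hu Hv; apply: sact_fix; apply: tpermD; apply/eqP => E; [exact: Hu|exact: Hv].
Qed.

Lemma swap_pre_pre M (u v : M.-tuple bool) (S : set X) :
  sact (tperm u v) @` (sact (tperm u v) @^-1` S) = S.
Proof.
rewrite swap_img; apply/seteqP; split => y /=; by rewrite swap_inv.
Qed.

Lemma case_set (fA h : Gelt) (hp : Gperm fA = id) (R : set X)
  (hR : Gset fA = R \/ Gset fA = ~` R) (cR : clopen R) (z : X) (hz : ~ R z)
  (he : Gperm h = id) a b (Ha : Gset h a /\ R a) (Hb : ~ Gset h b /\ R b) :
  ~ fpc fA h.
Proof.
move=> [L HL].
set H := Gset h.
have [Na HNa] : exists N, Cyl N a `<=` H `&` R.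
  apply: open_cyl => //; apply: (proj1 (clopenI _ _)) => //; exact: Gset_clopen.
have [Nb HNb] : exists N, Cyl N b `<=` ~` H `&` R.
  apply: open_cyl => //; apply: (proj1 (clopenI _ _)) => //.
  apply: clopenC'; exact: Gset_clopen.
pose N := maxn Na Nb.
have cylA : forall y, agree N y a -> H y /\ R y.
  by move=> y Hy; apply: HNa; apply: agree_le Hy; exact: leq_maxl.
have cylB : forall y, agree N y b -> ~ H y /\ R y.
  by move=> y Hy; apply: HNb; apply: agree_le Hy; exact: leq_maxr.
pose u j := prefix (N + j).+1 (ext N a j).
pose v j := prefix (N + j).+1 (ext N b j).
pose tau j := sact (tperm (u j) (v j)).
have toA : forall j y, prefix (N + j).+1 y = u j -> agree N y a.
  move=> j y /prefix_eq Hy i Hi; rewrite (Hy i); last first.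
    by apply: leq_trans Hi _; apply: leq_trans (leq_addr j N) (leqnSn _).
  exact: ext_agree.
have toB : forall j y, prefix (N + j).+1 y = v j -> agree N y b.
  move=> j y /prefix_eq Hy i Hi; rewrite (Hy i); last first.
    by apply: leq_trans Hi _; apply: leq_trans (leq_addr j N) (leqnSn _).
  exact: ext_agree.
have Rinv : forall j y, R (tau j y) <-> R y.
  move=> j y; have Hp := prefix_sact (tperm (u j) (v j)) y.
  case: (pselect (prefix (N + j).+1 y = u j)) => Hu.
    rewrite Hu tpermL in Hp; split => _.
      exact: (cylA _ (toA _ _ Hu)).2.
    exact: (cylB _ (toB _ _ Hp)).2.
  case: (pselect (prefix (N + j).+1 y = v j)) => Hv.
    rewrite Hv tpermR in Hp; split => _.
      exact: (cylB _ (toB _ _ Hv)).2.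
    exact: (cylA _ (toA _ _ Hp)).2.
  by rewrite /tau swap_fix.
have tauR : forall j, tau j @` Gset fA = Gset fA.
  move=> j; rewrite /tau swap_img; apply/seteqP; split => y /=;
    case: hR => ->; rewrite /=; move: (Rinv j y) => /= [H1 H2] //.
  - by move=> Hn Hy; apply: Hn; apply: H2.
  - by move=> Hn Hy; apply: Hn; apply: H1.
have sw : forall j, tau j (ext N a j) = ext N b j.
  move=> j; apply: sact_ext; first by rewrite tpermL.
  move=> i Hi; rewrite /ext ltnNge (leq_trans (leq_addr j N) (ltnW Hi)) //.
have inSt : forall j, inS (tau j).
  by move=> j; exists (N + j).+1, (tperm (u j) (v j)).
pose tj j := MkG clopen0 (inSt j).
pose K j := tau j @^-1` H.
have cK : forall j, clopen (K j).
  move=> j; apply: clopen_sact_pre; exact: Gset_clopen.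
pose kj j := MkG (cK j) inS_id.
have zfix : forall j, tau j z = z.
  move=> j; apply: swap_fix => E.
    by apply: hz; exact: (cylA _ (toA _ _ E)).2.
  by apply: hz; exact: (cylB _ (toB _ _ E)).2.
apply: (@pig (fun j => graw (kj j)) L (fun _ => True)).
- by move=> m; exists m.
- move=> j j' Hj [_ [E|E]].
  + have := congr1 (fun S => ext N a j \in S) E => /=.
    rewrite (mem_false (P := K j)); last first.
      by rewrite /K /= sw; apply: (cylB _ (@ext_agree _ _ _)).1.
    rewrite (mem_true (P := K j')) //.
    rewrite /K /= /tau swap_fix.
    * exact: (cylA _ (@ext_agree _ _ _)).1.
    * by move/prefix_eq; apply: ext_sep.
    * move=> Ev; have := cylB _ (toB _ _ Ev) => -[+ _]; apply.
      exact: (cylA _ (@ext_agree _ _ _)).1.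
  + have := congr1 (fun S => z \in S) E => /=.
    rewrite in_setC.
    have -> : (z \in K j) = (z \in H) by rewrite /K; apply/idP/idP => /set_mem Hz; apply: mem_set; move: Hz; rewrite /= zfix.
    have -> : (z \in K j') = (z \in H) by rewrite /K; apply/idP/idP => /set_mem Hz; apply: mem_set; move: Hz; rewrite /= zfix.
    by case: (_ \in _).
- move=> j _; apply: HL; exists (tj j); split.
  + rewrite /Geq /rmul /graw /= hp; split => //; left.
    rewrite image_id tauR; apply: set_eqb => x; rewrite !in_symdiff in_set0.
    by case: (x \in Gset fA).
  + rewrite /Geq /rmul /graw /= he; split => //; left.
    rewrite image_set0 /K /tau swap_pre_pre; apply: set_eqb => x; rewrite !in_symdiff in_set0.
    by case: (_ \in _).
Qed.

Lemma symdiff_cancel (T P Q : set X) :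
  symdiff T P = symdiff Q T \/ symdiff T P = ~` symdiff Q T -> P = Q \/ P = ~` Q.
Proof.
case=> E; [left|right]; apply: set_eqb => x; have := congr1 (fun S => x \in S) E => /=;
  rewrite ?in_setC !in_symdiff; by case: (x \in T); case: (x \in P); case: (x \in Q).
Qed.

Lemma pre_inv n (s : {perm n.-tuple bool}) (S : set X) :
  sact s @` S = S \/ sact s @` S = ~` S ->
  sact s @^-1` S = S \/ sact s @^-1` S = ~` S.
Proof.
case=> E; [left|right].
  by rewrite -{2}(pre_img s S) E.
by rewrite -{2}(pre_img s S) E preimage_setC setCK.
Qed.

Lemma back (fA h k : Gelt) (hp : Gperm fA = id) (he : Gperm h = id)
  (Hinv : forall n (s : {perm n.-tuple bool}),
      sact s @^-1` Gset fA = Gset fA \/ sact s @^-1` Gset fA = ~` Gset fA ->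
      sact s @^-1` Gset h = Gset h \/ sact s @^-1` Gset h = ~` Gset h) :
  conj_by_centralizer fA h k -> Geq (graw k) (graw h).
Proof.
move=> [t [c1 c2]].
have [n [s Hs]] := Gperm_inS t.
have ht : Gperm t = sact s by apply: functional_extensionality_dep.
move: c1 c2; rewrite /Geq /rmul /graw /= hp he ht image_id => -[_ c1] [c2 c3].
have HA := pre_inv (symdiff_cancel c1).
have HH := Hinv n s HA.
have Hk : Gperm k = id.
  apply: functional_extensionality_dep => y; have := congr1 (fun f => f y) c2 => /= E.
  by apply: (@sact_inj n s); rewrite -E.
split; first by rewrite /= Hk.
rewrite /=.
have HK : sact s @` Gset k = Gset h \/ sact s @` Gset k = ~` Gset h.
  apply: (@symdiff_cancel (Gset t)); case: c3 => E; [left; rewrite -E|right; rewrite E setCK] => //.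
have pK : forall P, sact s @` Gset k = P -> Gset k = sact s @^-1` P.
  by move=> P <-; rewrite pre_img.
have pC : sact s @^-1` (~` Gset h) = ~` (sact s @^-1` Gset h) by [].
case: HK => /pK ->; rewrite ?pC; case: HH => ->; rewrite ?setCK; by [left|right].
Qed.
Unset Implicit Arguments.

Theorem lemma3p3 (A : set X) (hA : clopen A) (hA0 : A <> set0) (hAX : A <> setT)
  (fA : Gelt) (hfA : Geq (graw fA) (Gf A)) :
  forall h : Gelt, fpc fA h <-> (Geq (graw h) Ge \/ Geq (graw h) (Gf A)).
Proof.
move: hfA; rewrite /Geq /graw /Gf /= => -[hp hs] h.
have [z0 hz0] : exists z, ~ A z.
  apply: contrapT => /forallNP Hn; apply: hAX; apply/seteqP; split => // x _.
  exact: contrapT (Hn x).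
have [z1 hz1] : exists z, A z.
  apply: contrapT => /forallNP Hn; apply: hA0; apply/seteqP; split => // x.
split.
- move=> Hf.
  have [n [s Hs]] := Gperm_inS h.
  have he : Gperm h = sact s by apply: functional_extensionality_dep.
  case: (pselect (exists x, sact s x <> x)) => [[x0 hx]|Hn].
    by exfalso; exact: (case_perm hp he hx Hf).
  have hid : Gperm h = id.
    apply: functional_extensionality_dep => x; rewrite he /=.
    by apply: contrapT => Hc; apply: Hn; exists x.
  rewrite /Ge /=.
  set H := Gset h.
  have hsC : Gset fA = ~` A \/ Gset fA = ~` ~` A by rewrite setCK; case: hs; [right|left].
  case: (pselect (exists a, H a /\ A a)) => [[a Ha]|nA1].
    case: (pselect (exists b, ~ H b /\ A b)) => [[b Hb]|nA2].
      by exfalso; exact: (case_set hp hs hA hz0 hid Ha Hb Hf).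
    case: (pselect (exists a, H a /\ ~ A a)) => [[a' Ha']|nB1].
      case: (pselect (exists b, ~ H b /\ ~ A b)) => [[b' Hb']|nB2].
        exfalso; apply: (case_set hp hsC (clopenC' hA) _ hid Ha' Hb' Hf).
        by move=> /(_ hz1).
      left; split => //; right; rewrite setC0; apply/seteqP; split => // x _.
      apply: contrapT => Hx; case: (pselect (A x)) => Ax.
        by apply: nA2; exists x.
      by apply: nB2; exists x.
    right; split => //; left; apply/seteqP; split => x Hx.
      by apply: contrapT => Ax; apply: nB1; exists x.
    by apply: contrapT => Hx'; apply: nA2; exists x.
  case: (pselect (exists a, H a /\ ~ A a)) => [[a' Ha']|nB1].
    case: (pselect (exists b, ~ H b /\ ~ A b)) => [[b' Hb']|nB2].
      exfalso; apply: (case_set hp hsC (clopenC' hA) _ hid Ha' Hb' Hf).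
      by move=> /(_ hz1).
    right; split => //; right; apply/seteqP; split => x Hx.
      by move=> Ax; apply: nA1; exists x.
    by apply: contrapT => Hx'; apply: nB2; exists x.
  left; split => //; left; apply/seteqP; split => x // Hx.
  case: (pselect (A x)) => Ax; [apply: nA1|apply: nB1]; by exists x.
- move=> Hh; exists [:: h] => k Hk; exists h; first by left.
  have he : Gperm h = id by case: Hh => -[].
  apply: (back hp he _ Hk) => m s.
  case: Hh => -[_ HH].
    by move=> _; case: HH => ->; left; rewrite ?preimage_setC ?preimage_set0.
  move: HH; rewrite /= => HH HA.
  have pC : forall S : set X, sact s @^-1` (~` S) = ~` (sact s @^-1` S) by [].
  have HA' : sact s @^-1` A = A \/ sact s @^-1` A = ~` A.
    case: hs HA => -> //; rewrite pC => -[E|E].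
      by left; rewrite -(setCK (sact s @^-1` A)) E setCK.
    by right; rewrite -(setCK (sact s @^-1` A)) E setCK.
  case: HH => ->; [|rewrite pC]; case: HA' => ->; rewrite ?setCK;
    first [by left | by right].
Qed.
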